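(* Let $\gamma_0:[1,2]\to\mathbf{C}$ be the piecewise affine path with $\gamma_0(1)=-2+i$, $\gamma_0(1.25)=1+i$, $\gamma_0(1.5)=1-i$, $\gamma_0(1.75)=-1-i$, $\gamma_0(2)=-1+2i$, affine on each of the intervals $[1,1.25],[1.25,1.5],[1.5,1.75],[1.75,2]$. Then every continuous path $\gamma:[1,2]\to\mathbf{C}$ with $\sup_{t\in[1,2]}|\gamma(t)-\gamma_0(t)|<1/2$ separates $0$ from $\infty$, i.e. $0$ lies in a bounded connected component of $\mathbf{C}\setminus\gamma([1,2])$. *)

(* Defs.v *)
(* The complex plane C is modelled as R * R
   (R : realType), with its product topology (= Euclidean topology). *)
From HB Require Import structures.
From mathcomp Require Import all_boot all_order all_algebra.
From mathcomp Require Import all_classical all_reals all_analysis.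
Set Implicit Arguments. Unset Strict Implicit. Unset Printing Implicit Defensive.
Import Order.TTheory GRing.Theory Num.Theory.
Import numFieldNormedType.Exports.
Local Open Scope classical_set_scope.
Local Open Scope ring_scope.

Definition cmod {R : realType} (z : R * R) : R := Num.sqrt (z.1 ^+ 2 + z.2 ^+ 2).

Definition csub {R : realType} (z w : R * R) : R * R := (z.1 - w.1, z.2 - w.2).

Definition caff {R : realType} (a b : R * R) (s : R) : R * R :=
  (a.1 + s * (b.1 - a.1), a.2 + s * (b.2 - a.2)).

Definition gamma0 {R : realType} (t : R) : R * R :=
  if t <= 5 / 4 then caff (-2, 1) (1, 1) (4 * (t - 1))
  else if t <= 3 / 2 then caff (1, 1) (1, -1) (4 * (t - 5 / 4))
  else if t <= 7 / 4 then caff (1, -1) (-1, -1) (4 * (t - 3 / 2))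
  else caff (-1, -1) (-1, 2) (4 * (t - 7 / 4)).

(* Main.v *)
Require Import Defs.
From HB Require Import structures.
From mathcomp Require Import all_boot all_order all_algebra.
From mathcomp Require Import all_classical all_reals all_analysis.
From mathcomp Require Import ring lra.
Import Order.TTheory GRing.Theory Num.Theory.
Import numFieldNormedType.Exports.
Local Open Scope classical_set_scope.
Local Open Scope ring_scope.

Set Implicit Arguments. Unset Strict Implicit. Unset Printing Implicit Defensive.

Section Alg.
Variable R : realFieldType.
Implicit Types u v w p q n : R * R.

Definition cross u v := u.1 * v.2 - u.2 * v.1.
Definition dotp u v := u.1 * v.1 + u.2 * v.2.
Definition nrm1 u := `|u.1| + `|u.2|.
Definition rr u := u.1 / nrm1 u.
Definition da u := if 0 <= u.2 then 1 - rr u else 3 + rr u.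
Definition ad u v := let d := da v - da u in
  if 2 < d then d - 4 else if d <= -2 then d + 4 else d.

Ltac abscases x := let h := fresh "h" in case: (lerP 0 x) => h;
  [rewrite ?(ger0_norm h) | rewrite ?(ltr0_norm h)].

Lemma divr_between (X Y lo hi : R) : 0 < Y -> lo * Y < X < hi * Y -> lo < X / Y < hi.
Proof.
move=> Y0 /andP[h1 h2]; apply/andP; split.
  by rewrite ltr_pdivlMr.
by rewrite ltr_pdivrMr.
Qed.

Lemma nrm1_gt0 u : (u.1 != 0) || (u.2 != 0) -> 0 < nrm1 u.
Proof.
rewrite /nrm1; case/orP => h.
  by apply: ltr_pwDl; rewrite ?normr_ge0 ?normr_gt0.
by apply: ltr_pwDr; rewrite ?normr_ge0 ?normr_gt0.
Qed.

Lemma cross_nz p q : cross p q != 0 -> ((p.1 != 0) || (p.2 != 0)) /\ ((q.1 != 0) || (q.2 != 0)).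
Proof.
rewrite /cross => h; split; rewrite -negb_and; apply/negP => /andP[/eqP a /eqP b];
  by move: h; rewrite a b ?mul0r ?mulr0 subrr eqxx.
Qed.


Lemma blk1 (x1 y1 x2 y2 : R) : 0 <= y1 -> 0 <= y2 -> 0 < x1*y2 - y1*x2 ->
  0 < `|x1| + y1 -> 0 < `|x2| + y2 ->
  0 * ((`|x1| + y1) * (`|x2| + y2)) < x1 * (`|x2| + y2) - x2 * (`|x1| + y1) < 2 * ((`|x1| + y1) * (`|x2| + y2)).
Proof. move=> h1 h2 hc; rewrite mul0r; abscases x1; abscases x2; move=> n1 n2; apply/andP; split; nra. Qed.
Lemma blk2 (x1 y1 x2 y2 : R) : 0 <= y1 -> y2 < 0 -> 0 < x1*y2 - y1*x2 ->
  0 < `|x1| + y1 -> 0 < `|x2| + - y2 ->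
  -2 * ((`|x1| + y1) * (`|x2| + - y2)) < x1 * (`|x2| + - y2) + x2 * (`|x1| + y1) < 0 * ((`|x1| + y1) * (`|x2| + - y2)).
Proof. move=> h1 h2 hc; rewrite mul0r; abscases x1; abscases x2; move=> n1 n2; apply/andP; split; nra. Qed.
Lemma blk3 (x1 y1 x2 y2 : R) : y1 < 0 -> 0 <= y2 -> 0 < x1*y2 - y1*x2 ->
  0 < `|x1| + - y1 -> 0 < `|x2| + y2 ->
  0 * ((`|x1| + - y1) * (`|x2| + y2)) < x1 * (`|x2| + y2) + x2 * (`|x1| + - y1) < 2 * ((`|x1| + - y1) * (`|x2| + y2)).
Proof. move=> h1 h2 hc; rewrite mul0r; abscases x1; abscases x2; move=> n1 n2; apply/andP; split; nra. Qed.
Lemma blk4 (x1 y1 x2 y2 : R) : y1 < 0 -> y2 < 0 -> 0 < x1*y2 - y1*x2 ->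
  0 < `|x1| + - y1 -> 0 < `|x2| + - y2 ->
  -2 * ((`|x1| + - y1) * (`|x2| + - y2)) < x1 * (`|x2| + - y2) - x2 * (`|x1| + - y1) < 0 * ((`|x1| + - y1) * (`|x2| + - y2)).
Proof. move=> h1 h2 hc; rewrite mul0r; abscases x1; abscases x2; move=> n1 n2; apply/andP; split; nra. Qed.

Lemma keyD p q : cross p q > 0 ->
  (0 < da q - da p < 2) \/ (-4 < da q - da p < -2).
Proof.
move=> hc.
have [nzp nzq] := cross_nz (lt0r_neq0 hc).
have N1 := nrm1_gt0 nzp; have N2 := nrm1_gt0 nzq.
move: hc N1 N2; rewrite /da /rr /nrm1 /cross.
case: p nzp => x1 y1; case: q nzq => x2 y2 /= _ _ hc N1 N2.
have E1 : x1 / (`|x1| + `|y1|) - x2 / (`|x2| + `|y2|) =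
   (x1 * (`|x2| + `|y2|) - x2 * (`|x1| + `|y1|)) / ((`|x1| + `|y1|) * (`|x2| + `|y2|)).
  by field; apply/andP; split; apply: lt0r_neq0.
have E2 : x1 / (`|x1| + `|y1|) + x2 / (`|x2| + `|y2|) =
   (x1 * (`|x2| + `|y2|) + x2 * (`|x1| + `|y1|)) / ((`|x1| + `|y1|) * (`|x2| + `|y2|)).
  by field; apply/andP; split; apply: lt0r_neq0.
have NN : 0 < (`|x1| + `|y1|) * (`|x2| + `|y2|) by apply: mulr_gt0.
move: E1 E2 NN N1 N2.
set a := x1 / _; set b := x2 / _.
case: (lerP 0 y1) => hy1; case: (lerP 0 y2) => hy2;
  rewrite ?(ger0_norm hy1) ?(ger0_norm hy2) ?(ltr0_norm hy1) ?(ltr0_norm hy2) => E1 E2 NN N1 N2.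
- left.
  have := divr_between NN (blk1 hy1 hy2 hc N1 N2); rewrite -E1 => h.
  apply/andP; split; lra.
- left.
  have := divr_between NN (blk2 hy1 hy2 hc N1 N2); rewrite -E2 => h.
  apply/andP; split; lra.
- right.
  have := divr_between NN (blk3 hy1 hy2 hc N1 N2); rewrite -E2 => h.
  apply/andP; split; lra.
- left.
  have := divr_between NN (blk4 hy1 hy2 hc N1 N2); rewrite -E1 => h.
  apply/andP; split; lra.
Qed.

Definition fnorm (d : R) := if 2 < d then d - 4 else if d <= -2 then d + 4 else d.
Lemma adE u v : ad u v = fnorm (da v - da u). Proof. by []. Qed.

Lemma fnormP d : (fnorm d = d - 4 /\ 2 < d) \/ (fnorm d = d + 4 /\ d <= -2) \/
   (fnorm d = d /\ -2 < d <= 2).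
Proof.
rewrite /fnorm; case: ifP => h; first by left.
case: ifP => h'; first by right; left.
by right; right; split => //; apply/andP; split; lra.
Qed.

Lemma fnorm_add d1 d2 : -4 < fnorm d1 + fnorm d2 - fnorm (d1 + d2) < 4 ->
  fnorm d1 + fnorm d2 = fnorm (d1 + d2).
Proof.
case: (fnormP d1) => [[-> h1]|[[-> h1]|[-> h1]]];
case: (fnormP d2) => [[-> h2]|[[-> h2]|[-> h2]]];
case: (fnormP (d1 + d2)) => [[-> h3]|[[-> h3]|[-> h3]]]; move=> h; lra.
Qed.

Lemma ad_pos p q : cross p q > 0 -> 0 < ad p q < 2.
Proof.
move=> /keyD; rewrite adE /fnorm => -[] /andP[h1 h2];
  case: ifP => ?; try case: ifP => ?; apply/andP; split; lra.
Qed.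

Lemma ad_neg p q : cross p q < 0 -> -2 < ad p q < 0.
Proof.
move=> h; have : cross q p > 0 by rewrite /cross; rewrite /cross in h; lra.
move=> /keyD; rewrite adE /fnorm => -[] /andP[h1 h2];
  case: ifP => ?; try case: ifP => ?; apply/andP; split; lra.
Qed.

Lemma ad_refl w : ad w w = 0.
Proof. by rewrite adE subrr /fnorm; case: ifP => ?; [lra|case: ifP => ?; lra]. Qed.

Lemma ad_same n p q : cross p q = 0 -> 0 < dotp n p -> 0 < dotp n q -> ad p q = 0.
Proof.
move=> hc hp hq.
have np0 : dotp n p != 0 by apply: lt0r_neq0.
set l := dotp n q / dotp n p.
have l0 : 0 < l by apply: divr_gt0.
have e1 : dotp n p * q.1 - dotp n q * p.1 = - n.2 * cross p q by rewrite /dotp /cross; ring.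
have e2 : dotp n p * q.2 - dotp n q * p.2 = n.1 * cross p q by rewrite /dotp /cross; ring.
rewrite hc mulr0 in e1 e2.
have Hq1 : q.1 = l * p.1.
  by rewrite /l; apply: (mulfI np0); rewrite mulrA mulrCA divff // mulr1; lra.
have Hq2 : q.2 = l * p.2.
  by rewrite /l; apply: (mulfI np0); rewrite mulrA mulrCA divff // mulr1; lra.
clearbody l.
have Hda : da q = da p.
  rewrite /da /rr /nrm1 Hq1 Hq2 pmulr_rge0 // !normrM (gtr0_norm l0) -mulrDr.
  have [->|pn] := eqVneq (`|p.1| + `|p.2|) 0.
    by rewrite mulr0 !invr0 !mulr0.
  by rewrite invfM mulrACA divff ?gt_eqF // mul1r.
by rewrite adE Hda -adE ad_refl.
Qed.

Lemma cross_trans n u v w : 0 < dotp n u -> 0 < dotp n v -> 0 < dotp n w ->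
  cross u v * dotp n w + cross v w * dotp n u = cross u w * dotp n v.
Proof. by move=> *; rewrite /cross /dotp; ring. Qed.

Lemma ad_sgn n p q : 0 < dotp n p -> 0 < dotp n q ->
  [/\ -2 < ad p q < 2, 0 < ad p q -> 0 < cross p q & ad p q < 0 -> cross p q < 0].
Proof.
move=> hp hq; case: (ltrgtP (cross p q) 0) => h.
- have /andP[h1 h2] := ad_neg h.
  by split; [apply/andP; split; lra | move=> ?; lra | move=> ?; lra].
- have /andP[h1 h2] := ad_pos h.
  by split; [apply/andP; split; lra | move=> ?; lra | move=> ?; lra].
- rewrite (ad_same h hp hq).
  by split; [apply/andP; split; lra | move=> ?; lra | move=> ?; lra].
Qed.

Lemma ad_add n u v w : 0 < dotp n u -> 0 < dotp n v -> 0 < dotp n w ->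
  ad u v + ad v w = ad u w.
Proof.
move=> hu hv hw.
have [b1 p1 n1] := ad_sgn hu hv.
have [b2 p2 n2] := ad_sgn hv hw.
have [b3 p3 n3] := ad_sgn hu hw.
have T := cross_trans hu hv hw.
have bnd : -4 < ad u v + ad v w - ad u w < 4.
  apply/andP; split.
  - case: (ltP (ad u v) 0) => h1; last by lra.
    case: (ltP (ad v w) 0) => h2; last by lra.
    case: (ltP 0 (ad u w)) => h3; last by lra.
    have c1 := n1 h1; have c2 := n2 h2; have c3 := p3 h3.
    have : cross u w * dotp n v < 0.
      by rewrite -T; nra.
    by rewrite pmulr_llt0 // => ?; lra.
  - case: (ltP 0 (ad u v)) => h1; last by lra.
    case: (ltP 0 (ad v w)) => h2; last by lra.
    case: (ltP (ad u w) 0) => h3; last by lra.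
    have c1 := p1 h1; have c2 := p2 h2; have c3 := n3 h3.
    have : 0 < cross u w * dotp n v.
      by rewrite -T; apply: addr_gt0; apply: mulr_gt0.
    by rewrite pmulr_lgt0 // => ?; lra.
move: bnd; rewrite !adE.
have -> : da w - da u = (da v - da u) + (da w - da v) by ring.
exact: fnorm_add.
Qed.

Fixpoint psum (f : R -> R * R) (x : R) (L : seq R) : R :=
  if L is y :: L' then ad (f x) (f y) + psum f y L' else 0.

Fixpoint fineL (d : R) (x : R) (L : seq R) : Prop :=
  if L is y :: L' then `|x - y| < d /\ fineL d y L' else True.

Definition inI (a b : R) (L : seq R) := all (fun t => (a <= t) && (t <= b)) L.

Definition CP (H : R -> R -> R * R) (a b c d dl : R) := forall s s' t t',
  a <= s <= b -> a <= s' <= b -> c <= t <= d -> c <= t' <= d ->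
  `|s - s'| < dl -> `|t - t'| < dl ->
  exists n, [/\ 0 < dotp n (H s t), 0 < dotp n (H s' t), 0 < dotp n (H s t')
                & 0 < dotp n (H s' t')].

Lemma strip_eq H a b c d dl : CP H a b c d dl -> forall x0 x1, a <= x0 <= b -> a <= x1 <= b ->
  `|x0 - x1| < dl -> forall T y0, fineL dl y0 T -> inI c d (y0 :: T) ->
  ad (H x0 y0) (H x1 y0) + psum (fun t => H x1 t) y0 T =
  psum (fun t => H x0 t) y0 T + ad (H x0 (last y0 T)) (H x1 (last y0 T)).
Proof.
move=> cp x0 x1 h0 h1 hx; elim=> [|y1 T IH] y0 /=.
  by move=> _ _; rewrite addr0 add0r.
move=> [hy fT] /andP[iy0 iT].
have iy1 : c <= y1 <= d by case/andP: iT.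
rewrite -addrA -(IH y1 fT iT).
have [n [A B D C]] := cp x0 x1 y0 y1 h0 h1 iy0 iy1 hx hy.
rewrite !addrA; congr (_ + _).
by rewrite (ad_add A B C) (ad_add A D C).
Qed.

Lemma grid_eq H a b c d dl : CP H a b c d dl -> forall S x0 T y0,
  fineL dl x0 S -> inI a b (x0 :: S) -> fineL dl y0 T -> inI c d (y0 :: T) ->
  psum (fun s => H s y0) x0 S + psum (fun t => H (last x0 S) t) y0 T =
  psum (fun t => H x0 t) y0 T + psum (fun s => H s (last y0 T)) x0 S.
Proof.
move=> cp; elim=> [|x1 S IH] x0 T y0 /=.
  by move=> *; rewrite addr0 add0r.
move=> [hx fS] /andP[ix0 iS] fT iT.
have ix1 : a <= x1 <= b by case/andP: iS.
rewrite -addrA (IH x1 T y0 fS iS fT iT) addrA.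
rewrite (strip_eq cp ix0 ix1 hx fT iT) -!addrA; congr (_ + _); by rewrite addrC.
Qed.

Lemma psum_tel n f x L : (forall t, t \in x :: L -> 0 < dotp n (f t)) ->
  psum f x L = ad (f x) (f (last x L)).
Proof.
elim: L x => [|y L IH] x /= h; first by rewrite ad_refl.
rewrite IH; last by move=> t ht; apply: h; rewrite inE ht orbT.
apply: (ad_add (n := n)); apply: h; rewrite ?inE ?eqxx ?orbT //.
by apply/orP; right; apply: mem_last.
Qed.

Lemma psum_cat f x L1 L2 : psum f x (L1 ++ L2) = psum f x L1 + psum f (last x L1) L2.
Proof. by elim: L1 x => [|y L IH] x /=; rewrite ?add0r // IH addrA. Qed.

Lemma fine_cat dl x L1 L2 : fineL dl x L1 -> fineL dl (last x L1) L2 -> fineL dl x (L1 ++ L2).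
Proof. by elim: L1 x => [|y L IH] x //= [h1 h2] h3; split => //; apply: IH. Qed.

Lemma fine_mono d1 d2 x L : d1 <= d2 -> fineL d1 x L -> fineL d2 x L.
Proof. by move=> le; elim: L x => [|y L IH] x //= [h1 h2]; split; [lra|apply: IH]. Qed.
End Alg.

Section T. Variable R : realType.

Lemma half_plane (u z : R * R) : 0 < `|u.1| + `|u.2| ->
  `|z.1 - u.1| < (`|u.1| + `|u.2|) / 4 -> `|z.2 - u.2| < (`|u.1| + `|u.2|) / 4 ->
  0 < dotp u z.
Proof.
case: u => u1 u2; case: z => z1 z2 /=; rewrite /dotp /=.
set A := `|u1|; set B := `|u2|; set e := (A + B) / 4.
move=> h l1 l2.
have sq1 : u1 * u1 = A * A by rewrite /A -normrM -expr2 ger0_norm // sqr_ge0.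
have sq2 : u2 * u2 = B * B by rewrite /B -normrM -expr2 ger0_norm // sqr_ge0.
have A0 : 0 <= A by apply: normr_ge0.
have B0 : 0 <= B by apply: normr_ge0.
have t1 : - (A * e) <= u1 * (z1 - u1).
  apply: lerNnormlW; rewrite normrM; apply: ler_wpM2l => //; exact: ltW.
have t2 : - (B * e) <= u2 * (z2 - u2).
  apply: lerNnormlW; rewrite normrM; apply: ler_wpM2l => //; exact: ltW.
have hh := mulr_gt0 h h.
have hs : 0 <= (A - B) * (A - B) by rewrite -expr2 sqr_ge0.
have k : 0 < A * A + B * B - A * e - B * e by rewrite /e; nra.
have -> : u1 * z1 + u2 * z2 = u1 * u1 + u1 * (z1 - u1) + (u2 * u2 + u2 * (z2 - u2)) by ring.
rewrite sq1 sq2; lra.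
Qed.

Lemma csub_nz (p q : R * R) : p != q -> 0 < `|(csub p q).1| + `|(csub p q).2|.
Proof.
case: p => p1 p2; case: q => q1 q2.
rewrite /csub /= xpair_eqE negb_and => /orP[] h.
  by apply: ltr_pwDl; rewrite ?normr_ge0 // normr_gt0 subr_eq0.
by apply: ltr_pwDr; rewrite ?normr_ge0 // normr_gt0 subr_eq0.
Qed.

Definition CONT (f : R -> R * R) (a b : R) := forall x, a <= x <= b -> forall e, 0 < e ->
  exists2 r, 0 < r & forall y, a <= y <= b -> `|x - y| < r ->
    `|(f x).1 - (f y).1| < e /\ `|(f x).2 - (f y).2| < e.

Lemma CP_exists (f g : R -> R * R) a b c d : CONT f a b -> CONT g c d ->
  (forall s t, a <= s <= b -> c <= t <= d -> f s != g t) ->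
  exists2 dl, 0 < dl & CP (fun s t => csub (f s) (g t)) a b c d dl.
Proof.
move=> cf cg neq.
set H := fun s t => csub (f s) (g t).
have cK : compact (`[a, b] `*` `[c, d]) := compact_setX (@segment_compact R a b) (@segment_compact R c d).
move: cK => /compact_near_coveringP cov.
pose K := `[a, b] `*` `[c, d].
pose P (i : R) (z : R * R) := K z -> forall s' t', a <= s' <= b -> c <= t' <= d ->
   `|z.1 - s'| < i -> `|z.2 - t'| < i ->
   exists n, [/\ 0 < dotp n (H z.1 z.2), 0 < dotp n (H s' z.2), 0 < dotp n (H z.1 t')
                & 0 < dotp n (H s' t')].
have loc : forall x, K x -> \forall x' \near x & i \near (0:R)^'+, P i x'.
  move=> [s0 t0] [/= hs0 ht0].
  have hs0' : a <= s0 <= b by move: hs0; rewrite /= in_itv.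
  have ht0' : c <= t0 <= d by move: ht0; rewrite /= in_itv.
  set u0 := H s0 t0.
  have nz : 0 < `|u0.1| + `|u0.2|.
    exact: (csub_nz (neq s0 t0 hs0' ht0')).
  set e4 := (`|u0.1| + `|u0.2|) / 4.
  have e0 : 0 < e4 / 2 by rewrite /e4; apply: divr_gt0 => //; apply: divr_gt0.
  have [r1 r10 Hr1] := cf s0 hs0' (e4 / 2) e0.
  have [r2 r20 Hr2] := cg t0 ht0' (e4 / 2) e0.
  set r := Num.min r1 r2.
  have r0 : 0 < r by rewrite /r lt_min r10 r20.
  have rr1 : r <= r1 by rewrite /r ge_min lexx.
  have rr2 : r <= r2 by rewrite /r ge_min lexx orbT.
  have corner : forall sg tu, a <= sg <= b -> c <= tu <= d -> `|s0 - sg| < r ->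
      `|t0 - tu| < r -> 0 < dotp u0 (H sg tu).
    move=> sg tu hsg htu d1 d2.
    have [f1 f2] := Hr1 sg hsg (lt_le_trans d1 rr1).
    have [g1 g2] := Hr2 tu htu (lt_le_trans d2 rr2).
    apply: half_plane => //; rewrite /u0 /H /csub /= -/e4.
      move: f1 g1 => /ltr_normlP[? ?] /ltr_normlP[? ?]; apply/ltr_normlP; split; lra.
    move: f2 g2 => /ltr_normlP[? ?] /ltr_normlP[? ?]; apply/ltr_normlP; split; lra.
  exists ([set z : R * R | `|z.1 - s0| < r / 2 /\ `|z.2 - t0| < r / 2],
          [set i : R | i < r / 2]).
    split => /=; last by apply: nbhs_right_lt; apply: divr_gt0.
    exists ([set z : R | `|z - s0| < r / 2], [set z : R | `|z - t0| < r / 2]).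
      split => /=.
        apply/nbhs_ballP; exists (r / 2) => /=; first by apply: divr_gt0.
        by move=> y; rewrite /ball /= distrC.
      apply/nbhs_ballP; exists (r / 2) => /=; first by apply: divr_gt0.
      by move=> y; rewrite /ball /= distrC.
    by move=> [z1 z2] [/= h1 h2].
  move=> [z i] [/= [hz1 hz2] hi] [/= Kz1 Kz2] s' t' hs' ht' d1 d2.
  have hz1' : a <= z.1 <= b by move: Kz1; rewrite /= in_itv.
  have hz2' : c <= z.2 <= d by move: Kz2; rewrite /= in_itv.
  have ab1 : `|s0 - z.1| < r by move: hz1 => /ltr_normlP[? ?]; apply/ltr_normlP; split; lra.
  have ab2 : `|t0 - z.2| < r by move: hz2 => /ltr_normlP[? ?]; apply/ltr_normlP; split; lra.
  have ab3 : `|s0 - s'| < r.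
    move: hz1 d1 => /ltr_normlP[? ?] /ltr_normlP[? ?]; apply/ltr_normlP; split; lra.
  have ab4 : `|t0 - t'| < r.
    move: hz2 d2 => /ltr_normlP[? ?] /ltr_normlP[? ?]; apply/ltr_normlP; split; lra.
  by exists u0; split; apply: corner.
have := cov R (0:R)^'+ P _ loc.
move=> /(_ _) => cov'.
have [i [/= i0 Hi]] := filter_ex (filterI (nbhs_right_gt (0:R)) cov').
exists i => // s s' t t' hs hs' ht ht' ds dt.
apply: (Hi (s, t)) => //; split; rewrite /= in_itv //.
Qed.
End T.

Section T. Variable R : realType.

Lemma within_CONT (f : R -> R * R) a b : {within `[a, b], continuous f} -> CONT f a b.
Proof.
move/subspace_continuousP => cf x hx e e0.
have Ax : `[a, b]%classic x by rewrite /= in_itv.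
have := cf x Ax.
move/cvgrPdist_lt/(_ e e0); rewrite near_withinE => /nbhs_ballP[r /= r0 Hr].
exists r => // y hy xy.
have := Hr y; rewrite /ball /= => /(_ xy) /(_ _) h.
have /h : y \in `[a, b] by rewrite in_itv.
rewrite prod_normE /= gt_max => /andP[h1 h2]; exact: (conj h1 h2).
Qed.
End T.

Section T. Variable R : realType.

Lemma fine_exists (a b dl : R) : a <= b -> 0 < dl ->
  exists L, [/\ fineL dl a L, inI a b (a :: L) & last a L = b].
Proof.
move=> ab d0.
have [N HN] : exists N : nat, b - a <= N%:R * (dl / 2).
  exists (Num.bound ((b - a) / (dl / 2))).
  have h0 : 0 <= (b - a) / (dl / 2) by apply: divr_ge0; lra.
  have h := archi_boundP h0.
  by rewrite -ler_pdivrMr ?divr_gt0 //; apply: ltW.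
elim: N a ab HN => [|N IH] a ab HN.
  exists [::]; split => //=; first by rewrite lexx ab.
  by apply/eqP; rewrite eq_le ab /=; move: HN; rewrite mul0r subr_le0.
case: (ltP (b - a) dl) => h.
  exists [:: b]; split => //=.
    by split => //; rewrite distrC ger0_norm //; lra.
  by apply/and3P; split => //; apply/andP; split => //; lra.
have ab' : a + dl / 2 <= b by lra.
have HN' : b - (a + dl / 2) <= N%:R * (dl / 2) by move: HN; rewrite -natr1 mulrDl mul1r; lra.
have [L [f1 i1 l1]] := IH _ ab' HN'.
exists (a + dl / 2 :: L); split => //=.
  split => //; rewrite distrC addrC addKr ger0_norm; lra.
rewrite /inI /= lexx ab /=.
apply/andP; split; first by apply/andP; split; lra.
apply/allP => t /= ht; move/allP: i1 => /(_ t (ltac:(by rewrite inE ht orbT))) /andP[h1 h2].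
apply/andP; split; lra.
Qed.
End T.

Section T. Variable R : realType.
Lemma cmod_ge1 (v : R * R) : `|v.1| <= cmod v.
Proof.
rewrite /cmod -sqrtr_sqr ler_sqrt; last by apply: addr_ge0; apply: sqr_ge0.
by rewrite lerDl sqr_ge0.
Qed.
Lemma cmod_ge2 (v : R * R) : `|v.2| <= cmod v.
Proof.
rewrite /cmod -sqrtr_sqr ler_sqrt; last by apply: addr_ge0; apply: sqr_ge0.
by rewrite lerDr sqr_ge0.
Qed.
Lemma cmod_le (v : R * R) : cmod v <= `|v.1| + `|v.2|.
Proof.
have h : 0 <= `|v.1| + `|v.2| by apply: addr_ge0.
rewrite /cmod -(ger0_norm h) -sqrtr_sqr ler_sqrt ?sqr_ge0 //.
have e1 : v.1 ^+ 2 = `|v.1| ^+ 2 by rewrite -normrX ger0_norm ?sqr_ge0.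
have e2 : v.2 ^+ 2 = `|v.2| ^+ 2 by rewrite -normrX ger0_norm ?sqr_ge0.
rewrite e1 e2 sqrrD; have := mulr_ge0 (normr_ge0 v.1) (normr_ge0 v.2); lra.
Qed.

Ltac g0tac t := rewrite /gamma0 /caff; case: (lerP t (5/4)) => ?; [| case: (lerP t (3/2)) => ?; [| case: (lerP t (7/4)) => ?]]; rewrite /=; try lra.

Lemma g0_bound (t : R) : 1 <= t <= 2 -> `|(gamma0 t).1| <= 2 /\ `|(gamma0 t).2| <= 2.
Proof. move=> /andP[? ?]; split; rewrite ler_norml; apply/andP; split; g0tac t. Qed.
Lemma g0_p1 (t : R) : 1 <= t <= 5/4 -> (gamma0 t).2 = 1.
Proof. move=> /andP[? ?]; g0tac t. Qed.
Lemma g0_p2 (t : R) : 5/4 <= t <= 3/2 -> (gamma0 t).1 = 1.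
Proof. move=> /andP[? ?]; g0tac t. Qed.
Lemma g0_p3 (t : R) : 3/2 <= t <= 7/4 -> (gamma0 t).2 = -1.
Proof. move=> /andP[? ?]; g0tac t. Qed.
Lemma g0_p4 (t : R) : 7/4 <= t <= 2 -> (gamma0 t).1 = -1.
Proof. move=> /andP[? ?]; g0tac t. Qed.
Lemma g0_1 : (gamma0 (1 : R)).1 = -2. Proof. g0tac (1:R). Qed.
Lemma g0_2 : (gamma0 (2 : R)).2 = 2. Proof. g0tac (2:R). Qed.
Lemma g0_54a : (gamma0 (5/4 : R)).1 = 1. Proof. g0tac (5/4:R). Qed.
Lemma g0_54b : (gamma0 (5/4 : R)).2 = 1. Proof. g0tac (5/4:R). Qed.
Lemma g0_32a : (gamma0 (3/2 : R)).1 = 1. Proof. g0tac (3/2:R). Qed.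
Lemma g0_32b : (gamma0 (3/2 : R)).2 = -1. Proof. g0tac (3/2:R). Qed.
Lemma g0_74a : (gamma0 (7/4 : R)).1 = -1. Proof. g0tac (7/4:R). Qed.
Lemma g0_74b : (gamma0 (7/4 : R)).2 = -1. Proof. g0tac (7/4:R). Qed.
End T.

Section T. Variable R : realType.

Lemma close_bound (gamma : R -> R * R) : {within `[1, 2], continuous gamma} ->
  sup [set cmod (csub (gamma t) (gamma0 t)) | t in `[1, 2]] < 1 / 2 ->
  forall t, 1 <= t <= 2 ->
  `|(gamma t).1 - (gamma0 t).1| < 1 / 2 /\ `|(gamma t).2 - (gamma0 t).2| < 1 / 2.
Proof.
move=> cg hs.
have cpt := continuous_compact cg (@segment_compact R 1 2).
have := compact_bounded cpt.
move=> [M [Mr HM]].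
have HM1 : forall t, 1 <= t <= 2 -> `|gamma t| <= M + 1.
  move=> t ht; apply: (HM (M + 1)); first lra.
  by exists t => //=; rewrite in_itv.
set S := [set cmod (csub (gamma t) (gamma0 t)) | t in `[1, 2]].
have hS : has_sup S.
  split; first by exists (cmod (csub (gamma 1) (gamma0 1))); exists 1 => //=; rewrite in_itv /= lexx; lra.
  exists (2 * (M + 1) + 4) => _ [t /= ht <-].
  move: ht; rewrite in_itv /= => ht.
  have := HM1 t ht; rewrite prod_normE ge_max => /andP[m1 m2].
  have [b1 b2] := g0_bound ht.
  apply: (le_trans (cmod_le _)); rewrite /csub /=.
  have := ler_normB (gamma t).1 (gamma0 t).1.
  have := ler_normB (gamma t).2 (gamma0 t).2.
  lra.
move=> t ht.
have hc : cmod (csub (gamma t) (gamma0 t)) < 1 / 2.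
  apply: le_lt_trans hs; apply: sup_upper_bound => //.
  by exists t => //=; rewrite in_itv.
split.
  by have := cmod_ge1 (csub (gamma t) (gamma0 t)); rewrite /csub /=; lra.
by have := cmod_ge2 (csub (gamma t) (gamma0 t)); rewrite /csub /=; lra.
Qed.
End T.

Section T. Variable R : realType.

Lemma CONT_sub (f : R -> R * R) a b a' b' : CONT f a b -> a <= a' -> b' <= b -> CONT f a' b'.
Proof.
move=> c ha hb x /andP[x1 x2] e e0.
have [|r r0 H] := c x _ e e0; first by apply/andP; split; lra.
exists r => // y /andP[y1 y2]; apply: H; apply/andP; split; lra.
Qed.

Lemma psum_telI n (f : R -> R * R) a b x L : inI a b (x :: L) ->
  (forall t, a <= t <= b -> 0 < dotp n (f t)) -> psum f x L = ad (f x) (f (last x L)).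
Proof.
move=> hI h; apply: psum_tel => t ht; apply: h.
by move/allP: hI => /(_ t ht).
Qed.

Lemma nlh (x y e : R) : `|x - y| < e -> y - e < x /\ x < y + e.
Proof. by move=> /ltr_normlP[h1 h2]; split; lra. Qed.

Definition CL (gamma : R -> R * R) := forall t, 1 <= t <= 2 ->
  `|(gamma t).1 - (gamma0 t).1| < 1 / 2 /\ `|(gamma t).2 - (gamma0 t).2| < 1 / 2.

Lemma cl1 gamma t : CL gamma -> 1 <= t <= 5/4 -> 1/2 < (gamma t).2 < 3/2.
Proof.
move=> cl /andP[h1 h2]; have [_ /nlh[u1 u2]] := cl t (ltac:(apply/andP; split; lra)).
have e := @g0_p1 R t (ltac:(apply/andP; split; lra)).
by rewrite e in u1 u2; apply/andP; split; lra.
Qed.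
Lemma cl2 gamma t : CL gamma -> 5/4 <= t <= 3/2 -> 1/2 < (gamma t).1 < 3/2.
Proof.
move=> cl /andP[h1 h2]; have [/nlh[u1 u2] _] := cl t (ltac:(apply/andP; split; lra)).
have e := @g0_p2 R t (ltac:(apply/andP; split; lra)).
by rewrite e in u1 u2; apply/andP; split; lra.
Qed.
Lemma cl3 gamma t : CL gamma -> 3/2 <= t <= 7/4 -> -3/2 < (gamma t).2 < -1/2.
Proof.
move=> cl /andP[h1 h2]; have [_ /nlh[u1 u2]] := cl t (ltac:(apply/andP; split; lra)).
have e := @g0_p3 R t (ltac:(apply/andP; split; lra)).
by rewrite e in u1 u2; apply/andP; split; lra.
Qed.
Lemma cl4 gamma t : CL gamma -> 7/4 <= t <= 2 -> -3/2 < (gamma t).1 < -1/2.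
Proof.
move=> cl /andP[h1 h2]; have [/nlh[u1 u2] _] := cl t (ltac:(apply/andP; split; lra)).
have e := @g0_p4 R t (ltac:(apply/andP; split; lra)).
by rewrite e in u1 u2; apply/andP; split; lra.
Qed.
Lemma cl_1 gamma : CL gamma -> (gamma 1).1 < -3/2.
Proof.
move=> cl; have [/nlh[u1 u2] _] := cl 1 (ltac:(apply/andP; split; lra)).
by rewrite g0_1 in u1 u2; lra.
Qed.
Lemma cl_2 gamma : CL gamma -> 3/2 < (gamma 2).2.
Proof.
move=> cl; have [_ /nlh[u1 u2]] := cl 2 (ltac:(apply/andP; split; lra)).
by rewrite g0_2 in u1 u2; lra.
Qed.
Lemma cl_54 gamma : CL gamma -> 1/2 < (gamma (5/4)).1 /\ 1/2 < (gamma (5/4)).2.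
Proof.
move=> cl; have [/nlh[u1 u2] /nlh[u3 u4]] := cl (5/4) (ltac:(apply/andP; split; lra)).
by rewrite g0_54a in u1 u2; rewrite g0_54b in u3 u4; split; lra.
Qed.
Lemma cl_32 gamma : CL gamma -> 1/2 < (gamma (3/2)).1 /\ (gamma (3/2)).2 < -1/2.
Proof.
move=> cl; have [/nlh[u1 u2] /nlh[u3 u4]] := cl (3/2) (ltac:(apply/andP; split; lra)).
by rewrite g0_32a in u1 u2; rewrite g0_32b in u3 u4; split; lra.
Qed.
Lemma cl_74 gamma : CL gamma -> (gamma (7/4)).1 < -1/2 /\ (gamma (7/4)).2 < -1/2.
Proof.
move=> cl; have [/nlh[u1 u2] /nlh[u3 u4]] := cl (7/4) (ltac:(apply/andP; split; lra)).
by rewrite g0_74a in u1 u2; rewrite g0_74b in u3 u4; split; lra.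
Qed.
End T.

Section T. Variable R : realType.

Lemma ad_lt0 (p q : R * R) : cross p q < 0 -> ad p q < 0.
Proof. by move=> /ad_neg /andP[]. Qed.
Lemma ad_gt0 (p q : R * R) : 0 < cross p q -> 0 < ad p q.
Proof. by move=> /ad_pos /andP[]. Qed.

Lemma self_cross (gamma : R -> R * R) : CONT gamma 1 2 -> CL gamma ->
  exists t1 t2, [/\ 1 <= t1 <= 5/4, 7/4 <= t2 <= 2 & gamma t1 = gamma t2].
Proof.
move=> cg cl; apply: contrapT => hne.
have neq : forall s t, 1 <= s <= 5/4 -> 7/4 <= t <= 2 -> gamma s != gamma t.
  by move=> s t hs ht; apply/eqP => e; apply: hne; exists s, t.
have cf : CONT gamma 1 (5/4) := @CONT_sub R gamma 1 2 1 (5/4) cg (ltac:(lra)) (ltac:(lra)).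
have cg' : CONT gamma (7/4) 2 := @CONT_sub R gamma 1 2 (7/4) 2 cg (ltac:(lra)) (ltac:(lra)).
have [dl d0 cp] := CP_exists cf cg' neq.
have [S [fS iS lS]] := @fine_exists R 1 (5/4) dl (ltac:(lra)) d0.
have [T [fT iT lT]] := @fine_exists R (7/4) 2 dl (ltac:(lra)) d0.
have E := grid_eq cp fS iS fT iT.
rewrite lS lT /= in E.
have [g1a] := (cl_1 cl); have g2b := cl_2 cl.
have [g54a g54b] := cl_54 cl; have [g74a g74b] := cl_74 cl.
have g1b := cl1 cl (ltac:(apply/andP; split; lra) : 1 <= (1:R) <= 5/4).
have g54c := cl1 cl (ltac:(apply/andP; split; lra) : 1 <= (5/4:R) <= 5/4).
have g74c := cl4 cl (ltac:(apply/andP; split; lra) : 7/4 <= (7/4:R) <= 2).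
have g2a := cl4 cl (ltac:(apply/andP; split; lra) : 7/4 <= (2:R) <= 2).
move: g1b g54c g74c g2a => /andP[? ?] /andP[? ?] /andP[? ?] /andP[? ?].
rewrite (@psum_telI R (0, 1) _ 1 (5/4) _ _ iS) in E; last first.
  move=> t ht; have /andP[? ?] := cl1 cl ht; rewrite /dotp /csub /=; lra.
rewrite (@psum_telI R (1, 0) _ (7/4) 2 _ _ iT) in E; last first.
  move=> t ht; have /andP[? ?] := cl4 cl ht; rewrite /dotp /csub /=; lra.
rewrite (@psum_telI R (-1, 0) _ (7/4) 2 _ _ iT) in E; last first.
  move=> t ht; have /andP[? ?] := cl4 cl ht; rewrite /dotp /csub /=; lra.
rewrite (@psum_telI R (0, -1) _ 1 (5/4) _ _ iS) in E; last first.
  move=> t ht; have /andP[? ?] := cl1 cl ht; rewrite /dotp /csub /=; lra.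
rewrite lS lT in E.
have h1 : ad (csub (gamma 1) (gamma (7/4))) (csub (gamma (5/4)) (gamma (7/4))) < 0.
  apply: ad_lt0; rewrite /cross /csub /=; nra.
have h2 : ad (csub (gamma (5/4)) (gamma (7/4))) (csub (gamma (5/4)) (gamma 2)) < 0.
  apply: ad_lt0; rewrite /cross /csub /=; nra.
have h3 : 0 < ad (csub (gamma 1) (gamma (7/4))) (csub (gamma 1) (gamma 2)).
  apply: ad_gt0; rewrite /cross /csub /=; nra.
have h4 : 0 < ad (csub (gamma 1) (gamma 2)) (csub (gamma (5/4)) (gamma 2)).
  apply: ad_gt0; rewrite /cross /csub /=; nra.
lra.
Qed.
End T.

Section T. Variable R : realType.

Lemma CONT_caff (x y : R * R) : CONT (caff x y) 0 1.
Proof.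
move=> s _ e e0.
set K := `|y.1 - x.1| + `|y.2 - x.2| + 1.
have K0 : 0 < K by rewrite /K; have := normr_ge0 (y.1 - x.1); have := normr_ge0 (y.2 - x.2); lra.
exists (e / K); first by apply: divr_gt0.
move=> s' _ hs; rewrite /caff /=.
have key : forall c : R, `|c| <= K -> `|x.1 + s * c - (x.1 + s' * c)| < e /\ True.
  move=> c hc; split => //.
  have -> : x.1 + s * c - (x.1 + s' * c) = (s - s') * c by ring.
  rewrite normrM.
  have hK : `|s - s'| * K < e by rewrite -ltr_pdivlMr.
  apply: le_lt_trans hK; apply: ler_wpM2l => //.
have key2 : forall (a c : R), `|c| <= K -> `|a + s * c - (a + s' * c)| < e.
  move=> a c hc.
  have -> : a + s * c - (a + s' * c) = (s - s') * c by ring.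
  rewrite normrM.
  have hK : `|s - s'| * K < e by rewrite -ltr_pdivlMr.
  by apply: le_lt_trans hK; apply: ler_wpM2l.
split; apply: key2; rewrite /K.
  have := normr_ge0 (y.2 - x.2); lra.
have := normr_ge0 (y.1 - x.1); lra.
Qed.

Lemma psum_ext (f g : R -> R * R) x L : (forall t, f t = g t) -> psum f x L = psum g x L.
Proof. by move=> e; elim: L x => [|y L IH] x //=; rewrite IH !e. Qed.

Lemma caff0 (x y : R * R) : caff x y 0 = x.
Proof. by case: x => ? ?; rewrite /caff /= !mul0r !addr0. Qed.
Lemma caff1 (x y : R * R) : caff x y 1 = y.
Proof. by case: x => ? ?; case: y => ? ?; rewrite /caff /= !mul1r; congr pair; ring. Qed.

Definition W (gamma : R -> R * R) t1 T (z : R * R) := psum (fun t => csub z (gamma t)) t1 T.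

Definition segok (gamma : R -> R * R) (x y : R * R) :=
  forall s, 0 <= s <= 1 -> forall t, 1 <= t <= 2 -> caff x y s != gamma t.

Lemma W_seg (gamma : R -> R * R) t1 t2 x y : CONT gamma 1 2 -> 1 <= t1 -> t1 <= t2 -> t2 <= 2 ->
  gamma t1 = gamma t2 -> segok gamma x y ->
  exists2 dl, 0 < dl & forall T, fineL dl t1 T -> inI t1 t2 (t1 :: T) -> last t1 T = t2 ->
    W gamma t1 T x = W gamma t1 T y.
Proof.
move=> cg h1 h12 h2 e sok.
have cg' : CONT gamma t1 t2 := @CONT_sub R gamma 1 2 t1 t2 cg h1 h2.
have neq : forall s t, 0 <= s <= 1 -> t1 <= t <= t2 -> caff x y s != gamma t.
  move=> s t hs /andP[? ?]; apply: sok => //; apply/andP; split; lra.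
have [dl d0 cp] := CP_exists (@CONT_caff x y) cg' neq.
exists dl => // T fT iT lT.
have [S [fS iS lS]] := @fine_exists R 0 1 dl ler01 d0.
have E := grid_eq cp fS iS fT iT.
rewrite lS lT -e /= in E.
have E2 : psum (fun t => csub (caff x y 0) (gamma t)) t1 T =
          psum (fun t => csub (caff x y 1) (gamma t)) t1 T by lra.
by rewrite caff0 caff1 in E2.
Qed.
End T.

Section T. Variable R : realType.

Fixpoint segs (gamma : R -> R * R) (x : R * R) (L : seq (R * R)) : Prop :=
  if L is y :: L' then segok gamma x y /\ segs gamma y L' else True.

Lemma W_path (gamma : R -> R * R) t1 t2 : CONT gamma 1 2 -> 1 <= t1 -> t1 <= t2 -> t2 <= 2 ->
  gamma t1 = gamma t2 -> forall L z, segs gamma z L ->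
  exists2 dl, 0 < dl & forall T, fineL dl t1 T -> inI t1 t2 (t1 :: T) -> last t1 T = t2 ->
    W gamma t1 T z = W gamma t1 T (last z L).
Proof.
move=> cg h1 h12 h2 e; elim=> [|y L IH] z /=.
  by move=> _; exists 1.
move=> [sok sL].
have [d1 d10 H1] := IH y sL.
have [d2 d20 H2] := W_seg cg h1 h12 h2 e sok.
exists (Num.min d1 d2); first by rewrite lt_min d10 d20.
move=> T fT iT lT.
rewrite (H2 T) ?(H1 T) //; apply: fine_mono fT; rewrite ge_min lexx ?orbT //.
Qed.

Lemma inI_mono (a b c d : R) L : inI a b L -> c <= a -> b <= d -> inI c d L.
Proof.
move=> /allP h ca bd; apply/allP => t /h /andP[? ?]; apply/andP; split; lra.
Qed.

Lemma W_neg (gamma : R -> R * R) t1 t2 dl : CL gamma -> 1 <= t1 <= 5/4 -> 7/4 <= t2 <= 2 ->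
  gamma t1 = gamma t2 -> 0 < dl ->
  exists T, [/\ fineL dl t1 T, inI t1 t2 (t1 :: T), last t1 T = t2 & W gamma t1 T (0, 0) < 0].
Proof.
move=> cl /andP[a1 a2] /andP[b1 b2] e d0.
have [T1 [f1 i1 l1]] := @fine_exists R t1 (5/4) dl a2 d0.
have [T2 [f2 i2 l2]] := @fine_exists R (5/4) (3/2) dl (ltac:(lra)) d0.
have [T3 [f3 i3 l3]] := @fine_exists R (3/2) (7/4) dl (ltac:(lra)) d0.
have [T4 [f4 i4 l4]] := @fine_exists R (7/4) t2 dl b1 d0.
exists (T1 ++ T2 ++ T3 ++ T4); split.
- apply: fine_cat => //; rewrite l1; apply: fine_cat => //; rewrite l2.
  by apply: fine_cat => //; rewrite l3.
- move: i1 i2 i3 i4 => /andP[_ A1] /andP[_ A2] /andP[_ A3] /andP[_ A4].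
  rewrite /inI /= !all_cat; apply/andP; split; first by apply/andP; split; lra.
  apply/andP; split; first by apply: (inI_mono A1); lra.
  apply/andP; split; first by apply: (inI_mono A2); lra.
  by apply/andP; split; [apply: (inI_mono A3) | apply: (inI_mono A4)]; lra.
- by rewrite !last_cat l1 l2 l3 l4.
rewrite /W !psum_cat l1 l2 l3.
have iA : forall t, t1 <= t <= 5/4 -> 1 <= t <= 5/4.
  by move=> t /andP[? ?]; apply/andP; split; lra.
have iD : forall t, 7/4 <= t <= t2 -> 7/4 <= t <= 2.
  by move=> t /andP[? ?]; apply/andP; split; lra.
rewrite (@psum_telI R (0, -1) _ t1 (5/4) _ _ i1); last first.
  move=> t /iA ht; have /andP[? ?] := cl1 cl ht; rewrite /dotp /csub /=; lra.
rewrite (@psum_telI R (-1, 0) _ (5/4) (3/2) _ _ i2); last first.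
  move=> t ht; have /andP[? ?] := cl2 cl ht; rewrite /dotp /csub /=; lra.
rewrite (@psum_telI R (0, 1) _ (3/2) (7/4) _ _ i3); last first.
  move=> t ht; have /andP[? ?] := cl3 cl ht; rewrite /dotp /csub /=; lra.
rewrite (@psum_telI R (1, 0) _ (7/4) t2 _ _ i4); last first.
  move=> t /iD ht; have /andP[? ?] := cl4 cl ht; rewrite /dotp /csub /=; lra.
rewrite l1 l2 l3 l4 -e.
have [g54a g54b] := cl_54 cl; have [g32a g32b] := cl_32 cl; have [g74a g74b] := cl_74 cl.
have /andP[ga _] := cl1 cl (iA t1 (ltac:(apply/andP; split; lra))).
have /andP[_ gb] := cl4 cl (iD t2 (ltac:(apply/andP; split; lra))).
rewrite -e in gb.
have h1 : ad (csub (0, 0) (gamma t1)) (csub (0, 0) (gamma (5/4))) < 0.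
  by apply: ad_lt0; rewrite /cross /csub /=; nra.
have h2 : ad (csub (0, 0) (gamma (5/4))) (csub (0, 0) (gamma (3/2))) < 0.
  by apply: ad_lt0; rewrite /cross /csub /=; nra.
have h3 : ad (csub (0, 0) (gamma (3/2))) (csub (0, 0) (gamma (7/4))) < 0.
  by apply: ad_lt0; rewrite /cross /csub /=; nra.
have h4 : ad (csub (0, 0) (gamma (7/4))) (csub (0, 0) (gamma t1)) < 0.
  by apply: ad_lt0; rewrite /cross /csub /=; nra.
lra.
Qed.
End T.

Section T. Variable R : realType.

Lemma cl_bnd (gamma : R -> R * R) t : CL gamma -> 1 <= t <= 2 ->
  -5/2 < (gamma t).1 < 5/2 /\ -5/2 < (gamma t).2 < 5/2.
Proof.
move=> cl ht; have [/nlh[h1 h2] /nlh[h3 h4]] := cl t ht; have [b1 b2] := g0_bound ht.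
move: b1 b2; rewrite !ler_norml => /andP[? ?] /andP[? ?].
by split; apply/andP; split; lra.
Qed.

Lemma W_far (gamma : R -> R * R) t1 t2 T z : CL gamma -> 1 <= t1 -> t2 <= 2 ->
  gamma t1 = gamma t2 -> inI t1 t2 (t1 :: T) -> last t1 T = t2 ->
  ~ (-3 <= z.1 <= 3 /\ -3 <= z.2 <= 3) -> W gamma t1 T z = 0.
Proof.
move=> cl h1 h2 e iT lT hz.
have bnd : forall t, t1 <= t <= t2 -> -5/2 < (gamma t).1 < 5/2 /\ -5/2 < (gamma t).2 < 5/2.
  by move=> t /andP[? ?]; apply: cl_bnd => //; apply/andP; split; lra.
have key : exists n : R * R, forall t, t1 <= t <= t2 -> 0 < dotp n (csub z (gamma t)).
  case: (lerP z.1 3) => a1; case: (lerP (-3) z.1) => a2;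
  case: (lerP z.2 3) => a3; case: (lerP (-3) z.2) => a4.
  all: try by exfalso; apply: hz; split; apply/andP; split.
  all: try first [ exists (1, 0); move=> t /bnd [/andP[? ?] /andP[? ?]]; rewrite /dotp /csub /=; lra
             | exists (-1, 0); move=> t /bnd [/andP[? ?] /andP[? ?]]; rewrite /dotp /csub /=; lra
             | exists (0, 1); move=> t /bnd [/andP[? ?] /andP[? ?]]; rewrite /dotp /csub /=; lra
             | exists (0, -1); move=> t /bnd [/andP[? ?] /andP[? ?]]; rewrite /dotp /csub /=; lra ].
have [n hn] := key.
by rewrite /W (psum_telI iT hn) lT -e ad_refl.
Qed.
End T.

Section T. Variable R : realType.

Lemma V_box (gamma : R -> R * R) : CONT gamma 1 2 -> CL gamma ->
  forall z L, segs gamma z L -> last z L = (0, 0) -> -3 <= z.1 <= 3 /\ -3 <= z.2 <= 3.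
Proof.
move=> cg cl z L sL lz.
have [t1 [t2 [ht1 ht2 e]]] := self_cross cg cl.
move: (ht1) (ht2) => /andP[a1 a2] /andP[b1 b2].
have [dl d0 HW] := W_path cg a1 (ltac:(lra) : t1 <= t2) b2 e sL.
have [T [fT iT lT Wn]] := W_neg cl ht1 ht2 e d0.
have := HW T fT iT lT; rewrite lz => Wz.
apply: contrapT => hz.
have := W_far cl a1 b2 e iT lT hz; lra.
Qed.

Lemma nb (U : set (R * R)) z : open U -> U z ->
  exists2 r, 0 < r & forall w, `|z.1 - w.1| < r -> `|z.2 - w.2| < r -> U w.
Proof.
rewrite openE => Uo Uz; have := Uo z Uz; rewrite /interior => /nbhs_ballP[r r0 Hr].
by exists r => // w h1 h2; apply: Hr; split.
Qed.

Lemma nb2 (V : set (R * R)) z r : 0 < r ->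
  (forall w, `|z.1 - w.1| < r -> `|z.2 - w.2| < r -> V w) -> nbhs z V.
Proof.
move=> r0 h; apply/nbhs_ballP; exists r => // w [h1 h2]; exact: h.
Qed.

Lemma seg_near (z w : R * R) r s : `|z.1 - w.1| < r -> `|z.2 - w.2| < r -> 0 <= s <= 1 ->
  `|z.1 - (caff w z s).1| < r /\ `|z.2 - (caff w z s).2| < r /\
  `|z.1 - (caff z w s).1| < r /\ `|z.2 - (caff z w s).2| < r.
Proof.
move=> /ltr_normlP[a1 a2] /ltr_normlP[b1 b2] /andP[s0 s1]; rewrite /caff /=.
by split; [|split; [|split]]; apply/ltr_normlP; split; nra.
Qed.

Definition Vset (gamma : R -> R * R) := [set z | exists L, segs gamma z L /\ last z L = (0, 0)].

Lemma cc_sub (gamma : R -> R * R) : closed (gamma @` `[1, 2]) -> ~ (gamma @` `[1, 2]) (0, 0) ->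
  connected_component (~` (gamma @` `[1, 2])) (0, 0) `<=` Vset gamma.
Proof.
set Img := gamma @` `[1, 2]; set U := ~` Img.
move=> cI n0.
have Uo : open U by apply: closed_openC.
have segU : forall x y, (forall s, 0 <= s <= 1 -> U (caff x y s)) -> segok gamma x y.
  move=> x y h s hs t ht; apply/eqP => e; apply: (h s hs); rewrite e.
  by exists t => //=; rewrite in_itv.
have VU : forall z, Vset gamma z -> U z.
  move=> z [[|y L] [sL lz]]; first by move: lz => /= ->.
  have [sok _] := sL; move=> [t /= ht e].
  have ht' : 1 <= t <= 2 by move: ht; rewrite /= in_itv.
  by have := sok 0 (ltac:(apply/andP; split; lra)) t ht'; rewrite caff0 e eqxx.
have Vo : open (Vset gamma).
  rewrite openE => z Vz; rewrite /interior.
  have [r r0 Hr] := nb Uo (VU z Vz).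
  apply: (nb2 r0) => w h1 h2.
  case: Vz => L [sL lz]; exists (z :: L); split => //; split => //.
  apply: segU => s hs; apply: Hr; have [? [? _]] := seg_near h1 h2 hs; by [].
have UVo : open (U `\` Vset gamma).
  rewrite openE => z [Uz nVz]; rewrite /interior.
  have [r r0 Hr] := nb Uo Uz.
  apply: (nb2 r0) => w h1 h2; split; first by apply: Hr.
  move=> [L [sL lw]]; apply: nVz; exists (w :: L); split => //; split => //.
  apply: segU => s hs; apply: Hr; have [_ [_ [? ?]]] := seg_near h1 h2 hs; by [].
move=> y [C [C0 CU cC] Cy].
have : C `&` Vset gamma = C.
  apply: cC.
  - by exists (0, 0); split => //; exists [::].
  - by exists (Vset gamma).
  - exists (~` (U `\` Vset gamma)); first exact: open_closedC.
    apply/seteqP; split => x [Cx hx]; split => //.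
      by move=> [_ ?].
    apply: contrapT => nV; apply: hx; split => //; exact: CU.
by move=> e; rewrite -e in Cy; case: Cy.
Qed.
End T.


Unset Implicit Arguments.

Theorem lemma7p2 (R : realType) (gamma : R -> R * R) :
  {within `[1, 2], continuous gamma} ->
  sup [set cmod (csub (gamma t) (gamma0 t)) | t in `[1, 2]] < 1 / 2 ->
  (~` (gamma @` `[1, 2])) (0, 0) /\
  bounded_set (connected_component (~` (gamma @` `[1, 2])) (0, 0)).
Proof.
move=> cg hs.
have cl : CL gamma := close_bound cg hs.
have cc : CONT gamma 1 2 := within_CONT cg.
have n0 : ~ (gamma @` `[1, 2]) (0, 0).
  move=> [t ht e]; move: ht; rewrite /= in_itv /= => /andP[t1 t2].
  case: (lerP t (5/4)) => h1.
    have /andP[u _] := cl1 cl (ltac:(apply/andP; split; lra) : 1 <= t <= 5/4).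
    by rewrite e /= in u; lra.
  case: (lerP t (3/2)) => h2.
    have /andP[u _] := cl2 cl (ltac:(apply/andP; split; lra) : 5/4 <= t <= 3/2).
    by rewrite e /= in u; lra.
  case: (lerP t (7/4)) => h3.
    have /andP[_ u] := cl3 cl (ltac:(apply/andP; split; lra) : 3/2 <= t <= 7/4).
    by rewrite e /= in u; lra.
  have /andP[_ u] := cl4 cl (ltac:(apply/andP; split; lra) : 7/4 <= t <= 2).
  by rewrite e /= in u; lra.
have cI : closed (gamma @` `[1, 2]).
  apply: compact_closed; first exact: norm_hausdorff.
  exact: continuous_compact cg (@segment_compact R 1 2).
split => //.
exists 3; split; first exact: num_real.
move=> M hM y /(cc_sub cI n0) [L [sL lz]].
have [/andP[a1 a2] /andP[b1 b2]] := V_box cc cl sL lz.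
rewrite /= prod_normE ge_max !ler_norml.
by apply/and3P; split; [apply/andP; split| |]; lra.
Qed.
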